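(* Let $\mathcal{H}_1,\mathcal{H}_2$ be hyperplanes in a partial linear space with $\mathcal{H}_1\subseteq\mathcal{H}_2$. If $\mathcal{H}_2$ is spiky, then $\mathcal{H}_1=\mathcal{H}_2$.
   Context: A partial linear space is a pair $(S,\mathcal{L})$ where $\mathcal{L}$ is a family of subsets of $S$ (lines) such that every line has at least two points, every point lies on some line, and two distinct lines share at most one point. Points are collinear if some line contains both. A subspace is a set $X\subseteq S$ such that every line meeting $X$ in at least two points is contained in $X$; a hyperplane is a proper subspace meeting every line. A set $X$ is spiky if every point of $X$ is collinear with some point not in $X$. *)

(* Defs.v *)
Definition pset (S : Type) := S -> Prop.

Definition set_eq {S : Type} (A B : pset S) : Prop := forall x, A x <-> B x.
Definition subset {S : Type} (A B : pset S) : Prop := forall x, A x -> B x.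

Definition partial_linear_space (S : Type) (L : pset S -> Prop) : Prop :=
  (forall l, L l -> exists x y, x <> y /\ l x /\ l y) /\
  (forall p : S, exists l, L l /\ l p) /\
  (forall l m, L l -> L m -> ~ set_eq l m ->
     forall x y, l x -> l y -> m x -> m y -> x = y).

Definition collinear {S : Type} (L : pset S -> Prop) (x y : S) : Prop :=
  exists l, L l /\ l x /\ l y.

Definition subspace {S : Type} (L : pset S -> Prop) (X : pset S) : Prop :=
  forall l, L l -> (exists x y, x <> y /\ l x /\ l y /\ X x /\ X y) ->
    subset l X.

Definition hyperplane {S : Type} (L : pset S -> Prop) (X : pset S) : Prop :=
  subspace L X /\ (exists p, ~ X p) /\
  (forall l, L l -> exists p, l p /\ X p).

Definition spiky {S : Type} (L : pset S -> Prop) (X : pset S) : Prop :=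
  forall x, X x -> exists y, ~ X y /\ collinear L x y.

(* Main.v *)
Require Import Defs.
From Stdlib Require Import Classical.

Theorem lemma1p4 (S : Type) (L : pset S -> Prop) (H1 H2 : pset S) :
  partial_linear_space S L ->
  hyperplane L H1 -> hyperplane L H2 ->
  subset H1 H2 -> spiky L H2 ->
  set_eq H1 H2.
Proof.
  intros _ [_ [_ Hm1]] [Hs2 _] Hsub Hsp x; split; [apply Hsub|].
  intros Hx. destruct (classic (H1 x)) as [h|hn]; [exact h|exfalso].
  destruct (Hsp x Hx) as [y [Hy [l [Hl [lx ly]]]]].
  destruct (Hm1 l Hl) as [w [lw Hw]].
  destruct (classic (w = x)) as [e|ne].
  - subst; contradiction.
  - apply Hy. apply (Hs2 l Hl); [|exact ly].
    exists x, w; repeat split; auto.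
Qed.
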